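(* Let $n\ge 3$ and let $p\neq q$ be integers such that there is a permutation $\pi$ of $\{1,\ldots,n\}$ whose discrete derivative takes exactly the values $p$ and $q$, i.e. $\{\pi_{i+1}-\pi_i : 1\le i\le n-1\}=\{p,q\}$. Then $p$ and $q$ have opposite signs, and $p$ and $q$ are relatively prime.
   Context: For a permutation $\pi=(\pi_1,\ldots,\pi_n)$ of $\{1,\ldots,n\}$, its discrete derivative is $D(\pi)=(\pi_2-\pi_1,\ldots,\pi_n-\pi_{n-1})$. A pair $(p,q)$ of distinct integers is called a $D$-pair if for some $n\ge 1$ there is a permutation $\pi$ of $\{1,\ldots,n\}$ whose set of discrete derivative values equals $\{p,q\}$. *)

(* Defs.v *)
From mathcomp Require Import all_boot all_order all_algebra.
Set Implicit Arguments. Unset Strict Implicit. Unset Printing Implicit Defensive.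
Import Order.TTheory GRing.Theory Num.Theory.
Local Open Scope ring_scope.

Definition is_perm_seq (n : nat) (s : seq int) : bool :=
  perm_eq s [seq (i%:Z) | i <- iota 1 n].

Definition dderiv (s : seq int) : seq int :=
  [seq (nth 0 s i.+1 - nth 0 s i) | i <- iota 0 (size s).-1].

(* Main.v *)
Require Import Defs.
From mathcomp Require Import all_boot all_order all_algebra.
From mathcomp Require Import zify.
Import Order.TTheory GRing.Theory Num.Theory.
Local Open Scope ring_scope.

Lemma mono_aux (f : nat -> int) (n : nat) :
  (forall i, (i < n)%N -> 1 <= f i <= n%:Z) ->
  (forall i, (i.+1 < n)%N -> 1 <= f i.+1 - f i) ->
  forall i, (i.+1 < n)%N -> f i.+1 - f i = 1.
Proof.
move=> Hr Hd.
have Hij : forall i j, (i <= j)%N -> (j < n)%N -> (j - i)%N%:Z <= f j - f i.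
  move=> i; elim=> [|j IH] hij hj.
    have -> : i = 0%N by lia.
    by rewrite subrr.
  case: (ltngtP i j.+1) => h; last first.
  - by rewrite h subrr subnn.
  - lia.
  have := IH (ltnSE h) (ltnW hj).
  have := Hd j hj.
  lia.
move=> i hi.
have h1 := Hij 0%N i (leq0n _) (ltnW hi).
have h2 := Hij i.+1 n.-1 ltac:(lia) ltac:(lia).
have h3 := Hr 0%N ltac:(lia).
have h4 := Hr n.-1 ltac:(lia).
have h5 := Hd i hi.
lia.
Qed.

Theorem lemma2p4 (n : nat) (p q : int) (pi : seq int) :
  (3 <= n)%N -> p != q -> is_perm_seq n pi ->
  (forall x : int, x \in dderiv pi <-> (x = p \/ x = q)) ->
  ((p < 0 < q) \/ (q < 0 < p)) /\ gcdz p q = 1.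
Proof.
move=> hn hpq hperm hD.
set f := fun i => nth 0 pi i.
have hsz : size pi = n by rewrite (perm_size hperm) size_map size_iota.
have huniq : uniq pi.
  rewrite (perm_uniq hperm) map_inj_uniq ?iota_uniq //.
  by move=> a b [].
have hmemr : forall x, (x \in pi) = (x \in [seq (i%:Z) | i <- iota 1 n]).
  by move=> x; rewrite (perm_mem hperm).
have hr : forall i, (i < n)%N -> 1 <= f i <= n%:Z.
  move=> i hi.
  have : f i \in pi by rewrite /f mem_nth // hsz.
  rewrite hmemr => /mapP [k]; rewrite mem_iota => hk ->.
  lia.
have hdiff : forall i, (i.+1 < n)%N -> f i.+1 - f i = p \/ f i.+1 - f i = q.
  move=> i hi; apply/hD.
  rewrite /dderiv; apply/mapP; exists i => //.
  rewrite mem_iota hsz; lia.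
have hex : forall x, x = p \/ x = q -> exists2 i, (i.+1 < n)%N & x = f i.+1 - f i.
  move=> x /hD /mapP [i]; rewrite mem_iota hsz => hi ->.
  exists i => //; lia.
have hnz : forall i, (i.+1 < n)%N -> f i.+1 - f i != 0.
  move=> i hi; rewrite subr_eq0.
  rewrite /f nth_uniq ?hsz //; [lia | lia].
have [ip hip ep] := hex p (or_introl erefl).
have [iq hiq eq] := hex q (or_intror erefl).
split.
- have p0 := hnz ip hip; rewrite -ep in p0.
  have q0 := hnz iq hiq; rewrite -eq in q0.
  have [hp|hp] : 0 < p \/ p < 0 by lia.
  + have [hq|hq] : 0 < q \/ q < 0 by lia.
    * have H := @mono_aux f n hr (fun i hi => ltac:(have := hdiff i hi; lia)).
      have := H ip hip; have := H iq hiq; lia.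
    * lia.
  + have [hq|hq] : 0 < q \/ q < 0 by lia.
    * lia.
    * have hr' : forall i, (i < n)%N -> 1 <= (n.+1%:Z - f i) <= n%:Z.
        move=> i hi; have := hr i hi; lia.
      have H := @mono_aux (fun i => n.+1%:Z - f i) n hr' (fun i hi => ltac:(have := hdiff i hi; lia)).
      have := H ip hip; have := H iq hiq; lia.
- set d := gcdz p q.
  have hdd : forall i, (i.+1 < n)%N -> (d %| f i.+1 - f i)%Z.
    move=> i hi; case: (hdiff i hi) => ->; [exact: dvdz_gcdl | exact: dvdz_gcdr].
  have hall : forall i, (i < n)%N -> (d %| f i - f 0%N)%Z.
    elim=> [|i IH] hi; first by rewrite subrr dvdz0.
    have -> : f i.+1 - f 0%N = (f i.+1 - f i) + (f i - f 0%N) by lia.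
    by apply: rpredD; [apply: hdd | apply: IH; lia].
  have m1 : (1%:Z \in pi) by rewrite hmemr; apply/mapP; exists 1%N => //; rewrite mem_iota; lia.
  have m2 : (2%:Z \in pi) by rewrite hmemr; apply/mapP; exists 2%N => //; rewrite mem_iota; lia.
  have i1 := hall (index 1%:Z pi) ltac:(rewrite -hsz index_mem //).
  have i2 := hall (index 2%:Z pi) ltac:(rewrite -hsz index_mem //).
  rewrite /f !nth_index // in i1 i2.
  have : (d %| (2%:Z - f 0%N) - (1%:Z - f 0%N))%Z by apply: rpredB.
  have -> : (2%:Z - f 0%N) - (1%:Z - f 0%N) = 1 by lia.
  rewrite dvdz1 => /eqP h.
  have : 0 <= d by rewrite /d /gcdz.
  lia.
Qed.
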